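(* Let $T>0$, $u_0\in C(\overline\Omega)$ with $u_0\ge0$, and $g\ge0$. Let $u\in C(\overline\Omega\times[0,T])$ be a supersolution of the problem $$u_t(x,t)=\int_GK_\epsilon(x,y)(u(y,t)-u(x,t))\,dy\ (x\in\Omega),\quad u(x,t)=g(x,t)\ (x\notin\Omega),\quad u(x,0)=u_0(x)\ (x\in\Omega).$$ Then $u\ge0$.
   Context: $G$ is a Carnot group, $\Omega\subset G$ a bounded connected open set, and $K_\epsilon(x,y)$ is the positive kernel $$K_\epsilon(x,y)=\frac{c(x)}{\epsilon^{Q+2}}a\big((\exp(E(x)\exp^{-1}(y^{-1}x)))^{-1}\big)J\big(\exp(L^{-1}(x)\exp^{-1}(\delta_{\epsilon^{-1}}(y^{-1}x)))\big),$$ where: $\mathfrak g=V_1\oplus\dots\oplus V_m$ is the stratified Lie algebra with adapted basis $X_1,\dots,X_n$, $n_k=\dim V_k$, $Q=\sum kn_k$, $\lambda_j=k$ if $X_j\in V_k$, $\phi_i$ the coordinates w.r.t. the basis, matrices act on $\mathfrak g$ via these coordinates, $\delta_r(\sum x_jX_j)=\sum r^{\lambda_j}x_jX_j$ (transported to $G$ by $\exp$), Haar measure is Lebesgue measure via $\exp$; $J\in L^1(G)$ positive, compactly supported with support $F$, $J(x)=J(x^{-1})$, $\int_{\mathbb R^n}J(\exp\sum t_rX_r)t_i\,dt=0$, $\int_{\mathbb R^n}J(\exp\sum t_rX_r)t_it_j\,dt=C(J)\delta_{ij}$, $C(J)>0$; $\tilde A=(a_{ij})_{i,j\le n_1}$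 symmetric positive definite smooth on $\overline\Omega$ with Cholesky factor $\tilde L$, $A,L$ their $n\times n$ extensions by the identity block; $W=\mathrm{diag}(\tilde b_i)$ with $\tilde b_i=b_i$ ($i\le n_1$), $b_i/\epsilon^2$ ($n_1<i\le n_1+n_2$), $1$ otherwise, $b_i$ smooth; $F'=\{y\exp(\delta_\epsilon L(y)\exp^{-1}(z^{-1})):y\in\Omega,z\in F\}$; $a(x)=\sum_i\phi_i(\exp^{-1}x)+M$, $M>0$ large so $a\ge\beta>0$ on $F'$; $c(x)=2[C(J)M(\det A(x))^{1/2}]^{-1}$, $E(x)=\frac M2W(x)A(x)^{-1}$. A function $u\in C([0,T];L^1(\Omega))$ is a supersolution of the problem if $u_t(x,t)\ge\int_GK_\epsilon(x,y)(u(y,t)-u(x,t))\,dy$ for $x\in\Omega$, $t>0$; $u(x,t)\ge g(x,t)$ for $x\notin\Omega$, $t>0$; and $u(x,0)\ge u_0(x)$ for $x\in\Omega$. Subsolutions are defined with reversed inequalities.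
   Formalization: Nonnegativity of the kernel $K_\epsilon(x,y)$ for all x ∈ Ω and y ∈ G is an explicit hypothesis, not a consequence of choosing M large so that a ≥ β > 0 on F′. The statement above fails without it. *)

(* Defs.v *)
From HB Require Import structures.
From mathcomp Require Import all_boot all_order all_algebra.
From mathcomp Require Import all_classical all_reals all_analysis.
Import Order.TTheory GRing.Theory Num.Theory numFieldNormedType.Exports.

Set Implicit Arguments.
Unset Strict Implicit.
Unset Printing Implicit Defensive.

Local Open Scope classical_set_scope.
Local Open Scope ring_scope.

(* The Carnot group G is represented in exponential coordinates: a point of *)
(* G is identified with the coordinate row vector (phi_1,..,phi_n) of       *)
(* exp^{-1} x w.r.t. the adapted basis X_1..X_n.  Hence exp and exp^{-1}    *)
(* are the identity, the inverse is x |-> -x, and the group law is given by *)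
(* the (finite, since g is nilpotent) Baker-Campbell-Hausdorff-Dynkin       *)
(* formula for the Lie bracket of g.                                         *)

(* Lie bracket of g from structure constants: [X_i, X_j] = sum_k sc i j k X_k *)
Definition lie_br (R : realType) (n : nat) (sc : 'I_n -> 'I_n -> 'I_n -> R)
  (x y : 'rV[R]_n) : 'rV[R]_n :=
  \row_k \sum_i \sum_j x 0 i * y 0 j * sc i j k.

Definition ebasis (R : realType) {n : nat} (i : 'I_n) : 'rV[R]_n := delta_mx 0 i.

Fixpoint nested_br (V : Type) (z : V) (br : V -> V -> V) (w : seq V) : V :=
  match w with
  | [::] => z
  | a :: w' => match w' with
               | [::] => a
               | _ :: _ => br a (nested_br z br w')
               end
  end.

Definition dynkin_word (V : Type) (m k : nat)
  (ps : {ffun 'I_k -> 'I_m.+1 * 'I_m.+1}) (X Y : V) : seq V :=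
  flatten [seq nseq (ps i).1 X ++ nseq (ps i).2 Y | i <- enum 'I_k].

Definition dynkin_tot (m k : nat) (ps : {ffun 'I_k -> 'I_m.+1 * 'I_m.+1}) : nat :=
  (\sum_i ((ps i).1 + (ps i).2))%N.

(* BCH-Dynkin formula log(exp X exp Y), truncated at total degree m; for a  *)
(* Lie algebra nilpotent of step m all the omitted terms vanish.            *)
Definition bch (R : realType) (n : nat) (sc : 'I_n -> 'I_n -> 'I_n -> R)
  (m : nat) (X Y : 'rV[R]_n) : 'rV[R]_n :=
  \sum_(1 <= k < m.+1)
    \sum_(ps : {ffun 'I_k -> 'I_m.+1 * 'I_m.+1} |
          [forall i, (0 < (ps i).1 + (ps i).2)%N] && (dynkin_tot ps <= m)%N)
      (((-1) ^+ k.-1 / k%:R / (dynkin_tot ps)%:R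
         / (\prod_i (((ps i).1)`! * ((ps i).2)`!))%N%:R)
       *: nested_br 0 (lie_br sc) (dynkin_word ps X Y)).

Definition gmul (R : realType) (n : nat) (sc : 'I_n -> 'I_n -> 'I_n -> R)
  (m : nat) (x y : 'rV[R]_n) : 'rV[R]_n := bch sc m x y.

(* g = V_1 + ... + V_m is a stratified Lie algebra, X_1..X_n an adapted   *)
(* basis, lam j = k iff X_j \in V_k (lam nondecreasing = adapted ordering) *)
Definition stratified (R : realType) (n m : nat) (lam : 'I_n -> nat)
  (sc : 'I_n -> 'I_n -> 'I_n -> R) : Prop :=
  [/\ (1 <= m)%N,
      (* Lie algebra axioms (bilinearity is built in) *)
      (forall i j k, sc i j k = - sc j i k) /\
      (forall x y z : 'rV[R]_n,
          lie_br sc x (lie_br sc y z) + lie_br sc y (lie_br sc z x)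
          + lie_br sc z (lie_br sc x y) = 0),
      ((forall j, (1 <= lam j <= m)%N) /\
       (forall i j : 'I_n, (i <= j)%N -> (lam i <= lam j)%N) /\
       (forall k, (1 <= k <= m)%N -> exists j, lam j = k)),
      (* [V_1, V_k] \subset V_{k+1}, in particular [V_1, V_m] = 0 *)
      (forall i j l, lam i = 1%N -> sc i j l != 0 -> lam l = (lam j).+1)
    & (* [V_1, V_k] spans V_{k+1} for k < m *)
      (forall k, (1 <= k < m)%N -> forall v : 'rV[R]_n,
          (forall l, v 0 l != 0 -> lam l = k.+1) ->
          exists coef : 'I_n -> 'I_n -> R,
            v = \sum_(i | lam i == 1%N) \sum_(j | lam j == k)
                  coef i j *: lie_br sc (ebasis R i) (ebasis R j))].

Definition hdim (n : nat) (lam : 'I_n -> nat) : nat := (\sum_j lam j)%N.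

Definition dil (R : realType) (n : nat) (lam : 'I_n -> nat) (r : R)
  (x : 'rV[R]_n) : 'rV[R]_n := \row_j (r ^+ lam j * x 0 j).

(* matrices act on g through coordinates (column-vector convention) *)
Definition act (R : realType) (n : nat) (A : 'M[R]_n) (v : 'rV[R]_n) : 'rV[R]_n :=
  v *m A^T.

Fixpoint iter_dir (R : realType) (n : nat) (vs : seq 'rV[R]_n)
  (f : 'rV[R]_n -> R) : 'rV[R]_n -> R :=
  match vs with
  | [::] => f
  | v :: vs' => fun x => 'D_v (iter_dir vs' f) x
  end.

Definition smooth_on (R : realType) (n : nat) (U : set 'rV[R]_n)
  (f : 'rV[R]_n -> R) : Prop :=
  forall (vs : seq 'rV[R]_n) x, U x ->
    {for x, continuous (iter_dir vs f)} /\ forall v, derivable (iter_dir vs f) x v.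

(* smooth on the closure of O: smooth on an open neighbourhood of it *)
Definition smooth_on_closure (R : realType) (n : nat) (O : set 'rV[R]_n)
  (f : 'rV[R]_n -> R) : Prop :=
  exists U, [/\ open U, closure O `<=` U & smooth_on U f].

Definition rowt (R : realType) (n : nat) (t : n.-tuple R) : 'rV[R]_n :=
  \row_i tnth t i.

(* mu is Lebesgue measure on R^n (product sigma-algebra): it gives every  *)
(* half-open box its volume; this characterizes it uniquely.              *)
Definition is_lebesgue (R : realType) (n : nat)
  (mu : {measure set (n.-tuple R) -> \bar R}) : Prop :=
  forall a b : n.-tuple R, (forall i, tnth a i <= tnth b i) ->
    mu [set t | forall i, tnth a i < tnth t i <= tnth b i]
    = (\prod_i (tnth b i - tnth a i))%:E.

Definition Wmat (R : realType) (n : nat) (lam : 'I_n -> nat)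
  (b : 'I_n -> 'rV[R]_n -> R) (eps : R) (x : 'rV[R]_n) : 'M[R]_n :=
  diag_mx (\row_i (if lam i == 1%N then b i x
                   else if lam i == 2%N then b i x / eps ^+ 2 else 1)).

Definition aK (R : realType) (n : nat) (M : R) (x : 'rV[R]_n) : R :=
  \sum_i x 0 i + M.

Definition cK (R : realType) (n : nat) (CJ M : R) (A : 'rV[R]_n -> 'M[R]_n)
  (x : 'rV[R]_n) : R :=
  2 / (CJ * M * Num.sqrt (\det (A x))).

Definition EK (R : realType) (n : nat) (lam : 'I_n -> nat) (M eps : R)
  (A : 'rV[R]_n -> 'M[R]_n) (b : 'I_n -> 'rV[R]_n -> R) (x : 'rV[R]_n)
  : 'M[R]_n :=
  (M / 2) *: (Wmat lam b eps x *m invmx (A x)).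

Definition kernelK (R : realType) (n m : nat) (lam : 'I_n -> nat)
  (sc : 'I_n -> 'I_n -> 'I_n -> R) (eps CJ M : R)
  (A L : 'rV[R]_n -> 'M[R]_n) (b : 'I_n -> 'rV[R]_n -> R)
  (J : 'rV[R]_n -> R) (x y : 'rV[R]_n) : R :=
  let yix := gmul sc m (- y) x in
  cK CJ M A x / eps ^+ (hdim lam + 2)
  * aK M (- act (EK lam M eps A b x) yix)
  * J (act (invmx (L x)) (dil lam eps^-1 yix)).

Definition Fprime (R : realType) (n m : nat) (lam : 'I_n -> nat)
  (sc : 'I_n -> 'I_n -> 'I_n -> R) (eps : R) (L : 'rV[R]_n -> 'M[R]_n)
  (Om F : set 'rV[R]_n) : set 'rV[R]_n :=
  [set p | exists2 y, Om y & exists2 z, F z &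
           p = gmul sc m y (dil lam eps (act (L y) (- z)))].

Definition supersolution (R : realType) (n : nat)
  (mu : {measure set (n.-tuple R) -> \bar R})
  (K : 'rV[R]_n -> 'rV[R]_n -> R) (Om : set 'rV[R]_n) (T : R)
  (g : 'rV[R]_n -> R -> R) (u0 : 'rV[R]_n -> R)
  (u : 'rV[R]_n -> R -> R) : Prop :=
  [/\ (forall x t, Om x -> 0 < t < T ->
         derivable (u x) t 1 /\
         ((\int[mu]_yt (K x (rowt yt) * (u (rowt yt) t - u x t))%:E)
           <= ('D_1 (u x) t)%:E)%E),
      (forall x t, ~ Om x -> 0 < t <= T -> g x t <= u x t)
    & (forall x, Om x -> u0 x <= u x 0)].

(* Main.v *)
Require Import Defs.
From HB Require Import structures.
From mathcomp Require Import all_boot all_order all_algebra.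
From mathcomp Require Import all_classical all_reals all_analysis.
From mathcomp Require Import ring lra.
Import Order.TTheory GRing.Theory Num.Theory numFieldNormedType.Exports.
Local Open Scope classical_set_scope.
Local Open Scope ring_scope.


Lemma closure_bdd_compact (R : realType) n (Om : set 'rV[R]_n) :
  bounded_set Om -> compact (closure Om).
Proof.
move=> Hb; apply: bounded_closed_compact; last exact: closed_closure.
case: Hb => M [Mr HM]; exists M; split => // r Mr'.
have H1 := HM r Mr'.
have cl : closed [set x : 'rV[R]_n | `|x| <= r].
  have -> : [set x : 'rV[R]_n | `|x| <= r] = (fun x : 'rV[R]_n => `|x|) @^-1` [set y | y <= r] by [].
  apply: closed_comp => [x _|]; last exact: closed_le.
  exact: norm_continuous.
move=> x /(closureS H1); by rewrite -(closure_id _).1.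
Qed.


Lemma cont1 (R : realType) n (C : set 'rV[R]_n) (T : R) (u : 'rV[R]_n -> R -> R) x :
  {within [set p : 'rV[R]_n * R | C p.1 /\ 0 <= p.2 <= T],
            continuous (fun p => u p.1 p.2)} -> C x ->
  {within [set s : R | 0 <= s <= T], continuous (u x)}.
Proof.
move=> Huc Cx; apply/subspace_continuousP => s As.
have /subspace_continuousP H := Huc.
have := H (x, s) (conj Cx As) => /= Hc.
have -> : u x = (fun p : 'rV[R]_n * R => u p.1 p.2) \o (fun r => (x, r)) by [].
apply: cvg_comp Hc => W /=.
rewrite /within /= => -[[P Q] /= [Px Qs] PQ].
rewrite nbhs_simpl /=.
apply: filterS Qs => r Qr Ar; apply: PQ => //=.
 by split=> //; exact: nbhs_singleton.
Qed.

Lemma neg1 (R : realType) (A : set R) (f : R -> R) s :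
  {within A, continuous f} -> A s -> f s < 0 ->
  exists2 e : R, 0 < e & forall r, A r -> `|s - r| < e -> f r < 0.
Proof.
move=> /subspace_continuousP H As fs.
have := @cvgr_lt _ _ _ _ _ _ (H s As) _ fs.
rewrite near_withinE => HH.
have [e /= e0 He] := (nbhs_ballP _ _).1 (HH (within_filter _ _)).
exists e => // r Ar Hr; apply: He => //.
Qed.

Lemma deriv_le (R : realType) (f : R -> R) t d r : 0 < r ->
  derivable f t 1 ->
  (forall s, t - r < s < t -> f t + d * (t - s) <= f s) -> 'D_1 f t <= - d.
Proof.
move=> r0 df H.
have cl : (fun h : R => h^-1 *: ((f \o shift t) (h *: 1) - f t)) @ 0^'-
          --> 'D_1 f t.
  apply: cvg_trans df.
  move=> W /=; rewrite !nbhs_simpl /= => HW.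
  move: HW; rewrite /dnbhs /at_left /within /= => HW; apply: filterS HW => h Hh hlt.
  by apply: Hh; rewrite lt_eqF.
apply: (cvgr_to_le cl).
near=> h.
have hlt : h < 0 by near: h; exact: nbhs_left_lt.
have hgt : - r < h by near: h; apply: nbhs_left_gt; rewrite oppr_lt0.
have := H (h + t).
rewrite /= (addrC h t) => Hs.
have {}Hs : f t + d * (t - (t + h)) <= f (t + h).
  by apply: Hs; apply/andP; split; lra.
have hA : h%:A = h :> R by exact: mulr1.
rewrite hA (addrC h t).
have X : - d * h <= f (t + h) - f t.
  by move: Hs; rewrite opprD addrA subrr add0r; lra.
have -> : - d = h^-1 * (- d * h) by field; rewrite lt_eqF.
rewrite /GRing.scale /=.
by apply: ler_wnM2l X; rewrite invr_le0 ltW.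
Unshelve. all: by end_near. Qed.

Theorem lemma4p3
  (R : realType) (n m : nat) (lam : 'I_n -> nat)
  (sc : 'I_n -> 'I_n -> 'I_n -> R)
  (Hstrat : stratified m lam sc)
  (mu : {measure set (n.-tuple R) -> \bar R}) (Hmu : is_lebesgue mu)
  (Om : set 'rV[R]_n)
  (HOm_open : open Om) (HOm_conn : connected Om) (HOm_bdd : bounded_set Om)
  (eps : R) (Heps : 0 < eps)
  (* J and C(J) *)
  (J : 'rV[R]_n -> R) (CJ : R)
  (HJpos : forall x, 0 <= J x)
  (HJint : mu.-integrable setT (fun t => (J (rowt t))%:E))
  (HJsupp : compact (closure [set x | J x != 0]))
  (HJsym : forall x, J (- x) = J x)
  (HJ1 : forall i, (\int[mu]_t (J (rowt t) * tnth t i)%:E = 0%:E)%E)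
  (HJ2 : forall i j, (\int[mu]_t (J (rowt t) * tnth t i * tnth t j)%:E
                      = (CJ * (i == j)%:R)%:E)%E)
  (HCJ : 0 < CJ)
  (* A (extension of A~ by the identity), its Cholesky factor L *)
  (A L : 'rV[R]_n -> 'M[R]_n)
  (HAid : forall x i j, closure Om x -> (lam i != 1%N) || (lam j != 1%N) ->
            A x i j = (i == j)%:R)
  (HAsym : forall x i j, closure Om x -> A x i j = A x j i)
  (HApd : forall x (v : 'rV[R]_n), closure Om x -> v != 0 ->
            0 < (v *m A x *m v^T) 0 0)
  (HAsmooth : forall i j, lam i = 1%N -> lam j = 1%N ->
            smooth_on_closure Om (fun x => A x i j))
  (HLid : forall x i j, closure Om x -> (lam i != 1%N) || (lam j != 1%N) ->
            L x i j = (i == j)%:R)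
  (HLlow : forall x (i j : 'I_n), closure Om x -> (i < j)%N -> L x i j = 0)
  (HLdiag : forall x i, closure Om x -> 0 < L x i i)
  (HLchol : forall x, closure Om x -> A x = L x *m (L x)^T)
  (* b_i *)
  (b : 'I_n -> 'rV[R]_n -> R)
  (Hbsmooth : forall i, (lam i <= 2)%N -> smooth_on_closure Om (b i))
  (* M and a *)
  (M : R) (HM : 0 < M)
  (HMa : exists2 beta : R, 0 < beta &
           forall p, Fprime m lam sc eps L Om (closure [set x | J x != 0]) p ->
             beta <= aK M p)
  (* K_eps is a positive kernel *)
  (HKpos : forall x y, Om x -> 0 <= kernelK m lam sc eps CJ M A L b J x y)
  (* data of the problem *)
  (T : R) (HT : 0 < T)
  (u0 : 'rV[R]_n -> R)
  (Hu0c : {within closure Om, continuous u0})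
  (Hu0 : forall x, closure Om x -> 0 <= u0 x)
  (g : 'rV[R]_n -> R -> R)
  (Hg : forall x t, ~ Om x -> 0 < t -> 0 <= g x t)
  (u : 'rV[R]_n -> R -> R)
  (Huc : {within [set p : 'rV[R]_n * R | closure Om p.1 /\ 0 <= p.2 <= T],
            continuous (fun p => u p.1 p.2)})
  (Hsup : supersolution mu (kernelK m lam sc eps CJ M A L b J) Om T g u0 u) :
  forall x t, closure Om x -> 0 <= t <= T -> 0 <= u x t.

Proof.
case: Hsup => Hde Hbd Hin.
have OmC : Om `<=` closure Om := @subset_closure _ Om.
have claim : forall T' d : R, 0 < T' -> T' < T -> 0 < d ->
    forall x t, closure Om x -> 0 <= t <= T' -> 0 <= u x t + d * t.
  move=> T' d T'0 T'T d0 x t Cx /andP[t0 tT'].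
  rewrite leNgt; apply/negP => vneg.
  pose K' := [set p : 'rV[R]_n * R | closure Om p.1 /\ 0 <= p.2 <= T'].
  have K'c : compact K'.
    have -> : K' = closure Om `*` `[0, T']%classic.
      apply/seteqP; split => -[y s] /=; rewrite in_itv //=.
    apply: compact_setX; first exact: closure_bdd_compact.
    exact: segment_compact.
  have K'ne : K' !=set0 by exists (x, t); split => //=; rewrite t0.
  have vc : {within K', continuous (fun p : 'rV[R]_n * R => u p.1 p.2 + d * p.2)}.
    apply: within_continuousD.
      apply: continuous_subspaceW Huc => -[y s] /= [Cy /andP[s0 sT']].
      by split => //; rewrite s0 /= (le_trans sT') // ltW.
    apply: continuous_subspaceT => p.
    by apply: cvgMr; exact: cvg_snd.
  have [[x0 t0'] /set_mem [/= Cx0 /andP[t00 t0T]] Hmin] := compact_EVT_min K'ne K'c vc.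
  have Hmin' : forall y s, closure Om y -> 0 <= s <= T' ->
      u x0 t0' + d * t0' <= u y s + d * s.
    by move=> y s Cy Hs; apply: (Hmin (y, s)); apply/mem_set.
  have vneg0 : u x0 t0' + d * t0' < 0.
    apply: le_lt_trans vneg; apply: Hmin' => //; by rewrite t0.
  have dt0 : 0 <= d * t0' by rewrite mulr_ge0 // ltW.
  case: (pselect (Om x0)) => Ox0.
  - case: (ltrP 0 t0') => t0pos; last first.
      have t0z : t0' = 0 by apply/eqP; rewrite eq_le t0pos t00.
      move: vneg0; rewrite t0z mulr0 addr0.
      have := Hin x0 Ox0; have := Hu0 x0 (OmC _ Ox0); lra.
    have t0TT : t0' < T by exact: le_lt_trans T'T.
    have [dv Hint] := Hde x0 t0' Ox0 (andb_true_intro (conj t0pos t0TT)).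
    have Dge : 0 <= 'D_1 (u x0) t0'.
      rewrite -lee_fin; apply: le_trans Hint.
      apply: integral_ge0 => yt _; rewrite lee_fin.
      apply: mulr_ge0; first exact: HKpos.
      rewrite subr_ge0.
      case: (pselect (closure Om (rowt yt))) => Cy.
        have := Hmin' (rowt yt) t0' Cy; rewrite t00 t0T => /(_ isT); lra.
      have Oy : ~ Om (rowt yt) by move=> /OmC.
      have := Hbd _ _ Oy (andb_true_intro (conj t0pos (ltW t0TT))).
      have := Hg _ _ Oy t0pos; lra.
    have Dle : 'D_1 (u x0) t0' <= - d.
      apply: (@deriv_le R (u x0) t0' d t0' t0pos dv) => s /andP[s1 s2].
      have := Hmin' x0 s Cx0.
      have -> : 0 <= s <= T' by apply/andP; split; lra.
      move=> /(_ isT) H; have : d * (t0' - s) = d * t0' - d * s by ring.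
      lra.
    lra.
  - case: (ltrP 0 t0') => t0pos.
      have := Hbd _ _ Ox0 (andb_true_intro (conj t0pos (ltW (le_lt_trans t0T T'T)))).
      have := Hg _ _ Ox0 t0pos; lra.
    have t0z : t0' = 0 by apply/eqP; rewrite eq_le t0pos t00.
    have un : u x0 0 < 0 by move: vneg0; rewrite t0z mulr0 addr0.
    have c1 := @cont1 _ _ _ _ _ _ Huc Cx0.
    have [e e0 He] := @neg1 _ _ _ _ c1 (andb_true_intro (conj (lexx 0) (ltW HT))) un.
    pose r := Num.min (e / 2) T.
    have r0 : 0 < r by rewrite lt_min HT andbT divr_gt0.
    have rT : r <= T by rewrite ge_min lexx orbT.
    have re : r < e.
      have : r <= e / 2 by rewrite ge_min lexx.
      lra.
    have := He r (andb_true_intro (conj (ltW r0) rT)).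
    rewrite sub0r normrN gtr0_norm // => /(_ re).
    have := Hbd _ _ Ox0 (andb_true_intro (conj r0 rT)).
    have := Hg _ _ Ox0 r0; lra.
move=> x t Cx /andP[t0 tT].
rewrite leNgt; apply/negP => uneg.
have c1 := @cont1 _ _ _ _ _ _ Huc Cx.
have [e e0 He] := @neg1 _ _ _ _ c1 (andb_true_intro (conj t0 tT)) uneg.
have [t' [t'0 t'T ut']] : exists t', [/\ 0 <= t', t' < T & u x t' < 0].
  case: (lerP (t - e / 2) 0) => Hc.
    exists 0; split => //; apply: He; first by apply/andP; split; lra.
    rewrite subr0 ger0_norm //; lra.
  exists (t - e / 2); split; [lra|lra|].
  apply: He; first by apply/andP; split; lra.
  rewrite opprB addrC subrK gtr0_norm; lra.
pose T' := (t' + T) / 2.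
have T'0 : 0 < T' by rewrite /T'; lra.
have T'T : T' < T by rewrite /T'; lra.
pose d := - u x t' / (2 * T').
have d0 : 0 < d by rewrite /d divr_gt0 ?oppr_gt0 // mulr_gt0.
have := claim T' d T'0 T'T d0 x t' Cx.
rewrite t'0 /= => /(_ (ltW _)).
have t'T' : t' < T' by rewrite /T'; lra.
move=> /(_ t'T') H.
have e1 : d * T' = - u x t' / 2 by rewrite /d; field; rewrite gt_eqF.
have e2 : d * t' <= d * T' by rewrite ler_wpM2l ?ltW.
lra.
Qed.
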